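(* Let $M$ be the $3\times 2$ array of cells (3 columns, 2 rows) whose standard figure $F\subseteq[0,3]\times[0,2]\subseteq\mathbb{R}^2$ is the union of the line segment from $(0,0)$ to $(2,2)$ (an increasing segment passing through the bottom cell of column 1 and the top cell of column 2), the segment from $(2,1)$ to $(3,0)$ (decreasing, in the bottom cell of column 3) and the segment from $(2,1)$ to $(3,2)$ (increasing, in the top cell of column 3). Then a permutation is a simple permutation avoiding both $4312$ and $3142$ if and only if it is a simple permutation lying in $\operatorname{Geom}(M)$.
   Context: A permutation $\pi$ avoids $\sigma$ if no subsequence of $\pi$ is order-isomorphic to $\sigma$. An interval of a permutation $\pi$ is a set of contiguous positions $\{a,a+1,\dots,b\}$ whose values $\{\pi(i)\}$ also form a set of contiguous integers; intervals of size $0$, $1$ and $n$ are trivial, and $\pi$ is simple if all its intervals are trivial. For a figure $F\subseteq\mathbb{R}^2$, $\operatorname{Geom}(M)$ is the set of all permutations obtained as follows: choose finitely many points of $F$, no two on a common horizontal or vertical line, label them $1,\dots,n$ from bottom to top, and read the labels from left to right. (In matrix form, with the top row displayed first, $M=\begin{pmatrix}0&1&1\\1&0&-1\end{pmatrix}$, where $1$ denotes an increasing diagonal segment across the cell, $-1$ a decreasing one, $0$ an empty cell.) *)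

(* Defs.v *)
From HB Require Import structures.
From mathcomp Require Import all_boot all_order all_algebra all_fingroup.
From mathcomp Require Import reals.
Set Implicit Arguments. Unset Strict Implicit. Unset Printing Implicit Defensive.
Import Order.TTheory GRing.Theory Num.Theory.

(* A permutation of length n is p : 'S_n; position i (0-indexed, left to
   right) carries value p i (0-indexed). *)

Definition contains_pattern (n : nat) (p : 'S_n) (s : seq nat) : Prop :=
  exists f : 'I_(size s) -> 'I_n,
    (forall a b : 'I_(size s), (a < b)%N -> (f a < f b)%N) /\
    (forall a b : 'I_(size s),
        (p (f a) < p (f b))%N = (nth 0%N s a < nth 0%N s b)%N).

Definition avoids (n : nat) (p : 'S_n) (s : seq nat) : Prop :=
  ~ contains_pattern p s.

Definition is_interval (n : nat) (p : 'S_n) (a b : nat) : Prop :=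
  (a <= b)%N /\ (b < n)%N /\
  exists lo hi : nat, forall v : 'I_n,
    (v \in [set p i | i : 'I_n & (a <= i <= b)%N]) = (lo <= v <= hi)%N.

Definition simple_perm (n : nat) (p : 'S_n) : Prop :=
  forall a b : nat, is_interval p a b ->
    (b - a).+1 = 1%N \/ (b - a).+1 = n.

Local Open Scope ring_scope.

(* The standard figure F of M = (0 1 1 / 1 0 -1) in [0,3]x[0,2]. *)
Definition in_figure (R : realType) (x y : R) : Prop :=
  (0 <= x <= 2 /\ y = x) \/
  (2 <= x <= 3 /\ y = 3 - x) \/
  (2 <= x <= 3 /\ y = x - 1).

(* p is in Geom(M): there are n points (x i, y i) of F, the i-th from the
   left carrying label p i, with labels increasing from bottom to top
   (and hence no two points on a common horizontal or vertical line). *)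
Definition in_geom (R : realType) (n : nat) (p : 'S_n) : Prop :=
  exists (x y : 'I_n -> R),
    (forall i j : 'I_n, (i < j)%N -> x i < x j) /\
    (forall i j : 'I_n, (p i < p j)%N -> y i < y j) /\
    (forall i : 'I_n, in_figure (x i) (y i)).

(* Main.v *)
Require Import Defs.
From HB Require Import structures.
From mathcomp Require Import all_boot all_order all_algebra all_fingroup.
From mathcomp Require Import reals.
From mathcomp Require Import zify lra.
Set Implicit Arguments. Unset Strict Implicit. Unset Printing Implicit Defensive.

Section Comb.
Variables (n : nat) (p : 'S_n).

Definition mk4 (i j k l : 'I_n) (a : 'I_4) : 'I_n := nth i [:: i; j; k; l] a.

Lemma pat_of (s : seq nat) (i j k l : 'I_n) : size s = 4 ->
  i < j -> j < k -> k < l ->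
  (forall a b : 'I_4, (p (mk4 i j k l a) < p (mk4 i j k l b)) = (nth 0 s a < nth 0 s b)) ->
  contains_pattern p s.
Proof.
move=> Hs ij jk kl H; rewrite /contains_pattern Hs.
exists (mk4 i j k l); split=> //.
move=> [[|[|[|[|a]]]] Ha] [[|[|[|[|b]]]] Hb] //= ?; rewrite /mk4 /=; lia.
Qed.

Lemma p3142 (i j k l : 'I_n) : avoids p [:: 3; 1; 4; 2] ->
  i < j -> j < k -> k < l -> p j < p l -> p l < p i -> p i < p k -> False.
Proof.
move=> Hav ij jk kl h1 h2 h3; apply: Hav; apply: (pat_of (i:=i) (j:=j) (k:=k) (l:=l)) => //.
move=> [[|[|[|[|a]]]] Ha] [[|[|[|[|b]]]] Hb] //=; rewrite /mk4 /=; try lia.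
Qed.

Lemma p4312 (i j k l : 'I_n) : avoids p [:: 4; 3; 1; 2] ->
  i < j -> j < k -> k < l -> p k < p l -> p l < p j -> p j < p i -> False.
Proof.
move=> Hav ij jk kl h1 h2 h3; apply: Hav; apply: (pat_of (i:=i) (j:=j) (k:=k) (l:=l)) => //.
move=> [[|[|[|[|a]]]] Ha] [[|[|[|[|b]]]] Hb] //=; rewrite /mk4 /=; try lia.
Qed.
End Comb.


Section Comb.
Variables (n : nat) (p : 'S_n).

Lemma ex_pos (y : nat) : y < n -> exists i : 'I_n, p i = y :> nat.
Proof. move=> Hy; exists (p^-1 (Ordinal Hy))%g; by rewrite permKV. Qed.

Lemma pinj (i j : 'I_n) : p i = p j :> nat -> i = j.
Proof. by move/ord_inj/perm_inj. Qed.

Lemma grow (Q : nat -> nat -> Prop) : (forall lo hi, Q lo hi -> hi < n) ->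
  (forall lo hi, Q lo hi -> exists lo' hi', Q lo' hi' /\ hi - lo < hi' - lo') ->
  forall lo hi, ~ Q lo hi.
Proof.
move=> Hb Hg.
suff H : forall k lo hi, n - (hi - lo) <= k -> ~ Q lo hi.
  by move=> lo hi; apply: (H (n - (hi - lo))).
elim=> [|k IH] lo hi Hk HQ.
  by have := Hb _ _ HQ; lia.
have [lo' [hi' [HQ' Hw]]] := Hg _ _ HQ.
have := Hb _ _ HQ'; have := Hb _ _ HQ => h1 h2.
by apply: (IH lo' hi') => //; lia.
Qed.

Lemma mk_interval (a b : 'I_n) lo hi : a <= b ->
  (forall i : 'I_n, a <= i <= b -> lo <= p i <= hi) ->
  (forall i : 'I_n, lo <= p i <= hi -> a <= i <= b) -> is_interval p a b.
Proof.
move=> ab H1 H2; split=> //; split=> //; exists lo, hi => v.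
apply/imsetP/idP.
  by move=> [i]; rewrite inE => /H1 Hi ->.
move=> Hv; exists (p^-1 v)%g; last by rewrite permKV.
by rewrite inE; apply: H2; rewrite permKV.
Qed.

Lemma intruder : simple_perm p -> forall lo hi, lo < hi -> hi < n ->
  ((forall i : 'I_n, lo <= p i <= hi -> 0 < i) \/
   (forall i : 'I_n, lo <= p i <= hi -> i < n.-1)) ->
  exists u q v : 'I_n, [/\ u < q, q < v, lo <= p u <= hi, lo <= p v <= hi & ~~ (lo <= p q <= hi)].
Proof.
move=> Hs lo hi lh hn Hnt.
have [ilo Hilo] := ex_pos (ltn_trans lh hn).
have [ihi Hihi] := ex_pos hn.
have Pilo : (fun i : 'I_n => lo <= p i <= hi) ilo by rewrite /= Hilo; lia.
have Pihi : (fun i : 'I_n => lo <= p i <= hi) ihi by rewrite /= Hihi; lia.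
case: (@arg_minnP _ ilo (fun i : 'I_n => lo <= p i <= hi) val Pilo) => a Pa mina.
case: (@arg_maxnP _ ilo (fun i : 'I_n => lo <= p i <= hi) val Pilo) => b Pb maxb.
have [/existsP [q /andP [/andP [aq qb] nq]]|Hno] :=
  boolP [exists q : 'I_n, (a < q < b) && ~~ (lo <= p q <= hi)].
  by exists a, q, b; split.
have ab : a < b.
  have h1 : a <= ihi := mina _ Pihi. have h2 : ihi <= b := maxb _ Pihi.
  have h3 : a <= ilo := mina _ Pilo. have h4 : ilo <= b := maxb _ Pilo.
  have : (ilo : nat) != ihi by apply/eqP => /ord_inj E; move: Hilo Hihi; rewrite E; lia.
  move=> /eqP; lia.
have Hint : is_interval p a b.
  apply: (mk_interval (lo:=lo) (hi:=hi)); first lia.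
    move=> i /andP [ai ib].
    case: (ltngtP a i) ai => // [ai|/ord_inj <- //] _.
    case: (ltngtP i b) ib => // [ib|/ord_inj -> //] _.
    apply/negPn/negP => Hn; move/existsP: Hno; apply; exists i; by rewrite ai ib Hn.
  by move=> i Hi; have h1 : a <= i := mina _ Hi; have h2 : i <= b := maxb _ Hi; lia.
case: (Hs _ _ Hint) => E.
  lia.
case: Hnt => H.
  have := H _ Pa; have := ltn_ord b; lia.
have := H _ Pb; have := ltn_ord b; lia.
Qed.

Variable m : 'I_n.
Hypothesis Hm : p m = n.-1 :> nat.

Lemma ltN (x : 'I_n) : (x : nat) != m -> p x < n.-1.
Proof.
move=> xm; have := ltn_ord (p x); have : (p x : nat) != p m.
  by apply: contra xm => /eqP /pinj ->.
rewrite Hm; lia.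
Qed.

Section A.
Hypothesis Hav : avoids p [:: 3; 1; 4; 2].
Hypothesis Hs : simple_perm p.

Lemma spanA (u v : 'I_n) : u < v -> v < m -> p v < p u ->
  forall k : 'I_n, p v <= p k <= p u -> k < m.
Proof.
move=> uv vm vu k Hk; rewrite ltnNge; apply/negP => mk.
have um : (u : nat) != m by lia.
have := ltN um => hu.
case: (ltngtP m k) mk => // [mk|mk] _; last first.
  have E : k = m by apply: ord_inj.
  rewrite E Hm in Hk; lia.
have [E|kv] := eqVneq (p k : nat) (p v).
  by move: E => /pinj E; rewrite E in mk; lia.
have [E|ku] := eqVneq (p k : nat) (p u).
  by move: E => /pinj E; rewrite E in mk; lia.
apply: (p3142 Hav (i:=u) (j:=v) (k:=m) (l:=k)) => //; rewrite ?Hm; lia.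
Qed.

Lemma claimA (i j : 'I_n) : i < j -> j < m -> p i < p j.
Proof.
move=> ij jm; rewrite ltnNge leq_eqVlt negb_or; apply/andP; split.
  by apply/eqP => /pinj E; rewrite E in ij; lia.
apply/negP => ji.
pose Q lo hi := lo < hi /\ hi < n /\ forall k : 'I_n, lo <= p k <= hi -> k < m.
apply: (@grow Q _ _ (p j) (p i)).
- by move=> lo hi [_ []].
- move=> lo hi [lh [hn Hb]].
  have HH : forall k : 'I_n, lo <= p k <= hi -> k < n.-1.
    by move=> k /Hb; have := ltn_ord m; lia.
  have [u [q [v [uq qv Hu Hv Hq]]]] := intruder Hs lh hn (or_intror HH).
  have vm := Hb _ Hv.
  case/orP: (leqVgt (p q) hi) => hq.
    have qlo : p q < lo by move: Hq; rewrite hq andbT -ltnNge.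
    exists (p q : nat), hi; split; last lia.
    split; first lia; split => // k Hk.
    case/orP: (leqVgt lo (p k)) => hk; first by apply: Hb; lia.
    apply: (spanA (u:=u) (v:=q)) => //; try lia.
  exists lo, (p q : nat); split; last lia.
  split; first lia; split => // k Hk.
  case/orP: (leqVgt (p k) hi) => hk; first by apply: Hb; lia.
  apply: (spanA (u:=q) (v:=v)) => //; lia.
- split; first lia; split => //; apply: spanA => //; lia.
Qed.
End A.
Section B.
Hypothesis Hav : avoids p [:: 3; 1; 4; 2].
Hypothesis Hav2 : avoids p [:: 4; 3; 1; 2].
Hypothesis Hs : simple_perm p.

Lemma no312 (i j k : 'I_n) : m < i -> i < j -> j < k -> p j < p k -> p k < p i -> False.
Proof.
move=> mi ij jk h1 h2.
have im : (i : nat) != m by lia.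
have := ltN im => hi.
apply: (p4312 Hav2 (i:=m) (j:=i) (k:=j) (l:=k)) => //; rewrite Hm; lia.
Qed.

Variable r0 : 'I_n.
Hypothesis Hr0 : r0 = m.+1 :> nat.

Lemma spanB (y z k : 'I_n) : r0 < y -> y < z -> p r0 < p z -> p z < p y ->
  p z < p k -> p k < p y -> m.+1 < k /\ k < z.
Proof.
move=> ry yz rz zy zk ky.
have ym : (y : nat) != m by lia.
have := ltN ym => hy.
split.
  rewrite ltnNge; apply/negP => km.
  case: (ltngtP k m) => [kltm|mltk|kEm].
  - by apply: (p3142 Hav (i:=k) (j:=r0) (k:=y) (l:=z)) => //; lia.
  - have E : k = r0 by apply: ord_inj; lia.
    by rewrite E in zk; lia.
  - have E : k = m by apply: ord_inj.
    by rewrite E Hm in ky; lia.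
case: (ltngtP k z) => // [zk'|E].
  by exfalso; apply: (no312 (i:=y) (j:=z) (k:=k)) => //; lia.
have E' : k = z by apply: ord_inj.
by exfalso; rewrite E' in zk; lia.
Qed.
Lemma claimB (x y z : 'I_n) : m < x -> m < y -> x < z -> y < z -> p x < p z -> p z < p y -> False.
Proof.
move=> mx my xz yz xz' zy.
have xy : x < y.
  case: (ltngtP x y) => [|yx|E] //.
    by exfalso; apply: (no312 (i:=y) (j:=x) (k:=z)).
  exfalso; have E' : x = y by apply: ord_inj.
  by rewrite E' in xz'; lia.
have rz : p r0 < p z.
  case: (ltngtP r0 x) => [rx|xr|E]; last first.
  - have E' : r0 = x by apply: ord_inj.
    by rewrite E'.
  - lia.
  case: (ltngtP (p r0) (p z)) => [|zr|E] //.
    by exfalso; apply: (no312 (i:=r0) (j:=x) (k:=z)) => //; lia.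
  by exfalso; move/pinj: E => E; rewrite E in rx; lia.
pose Q lo hi := [/\ lo < hi, hi < n, p r0 < lo, (forall k : 'I_n, lo <= p k <= hi -> m.+1 < k)
   & (forall k j : 'I_n, lo <= p k <= hi -> p j = lo :> nat -> k <= j)].
apply: (@grow Q _ _ (p z) (p y)).
- by move=> lo hi [].
- move=> lo hi [lh hn rl Hb Hmax].
  have HH : forall k : 'I_n, lo <= p k <= hi -> 0 < k by move=> k /Hb; lia.
  have [u [q [v [uq qv Hu Hv Hq]]]] := intruder Hs lh hn (or_introl HH).
  have [b Eb] := ex_pos (ltn_trans lh hn).
  have vb := Hmax v b Hv Eb.
  have ub := Hmax u b Hu Eb.
  have mu := Hb u Hu.
  case/orP: (leqVgt (p q) hi) => hq.
    have qlo : p q < lo by move: Hq; rewrite hq andbT -ltnNge.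
    exfalso; apply: (no312 (i:=u) (j:=q) (k:=b)); try lia.
    rewrite ltn_neqAle; apply/andP; split; last lia.
    by apply/eqP => /pinj E; rewrite E in vb; lia.
  have rq : r0 < q by lia.
  have Hsp : forall k : 'I_n, lo <= p k <= p q -> (p k : nat) != p q -> hi < p k -> m.+1 < k /\ k < b.
    move=> k Hk kq hk; apply: (spanB (y:=q) (z:=b) (k:=k)); rewrite ?Eb; lia.
  exists lo, (p q : nat); split; last lia.
  split => //; first lia.
    move=> k Hk; case/orP: (leqVgt (p k) hi) => hk; first by apply: Hb; lia.
    have [E|kq] := eqVneq (p k : nat) (p q); last by case: (Hsp k Hk kq hk).
    by move/pinj: E => ->; lia.
  move=> k j Hk Ej.
  have -> : j = b by apply: pinj; rewrite Ej Eb.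
  case/orP: (leqVgt (p k) hi) => hk; first by apply: Hmax; lia.
  have [E|kq] := eqVneq (p k : nat) (p q); last by case: (Hsp k Hk kq hk); lia.
  by move/pinj: E => ->; lia.
- have Hsp : forall k : 'I_n, p z <= p k <= p y -> (p k : nat) != p y -> (p k : nat) != p z -> m.+1 < k /\ k < z.
    move=> k Hk ky kz; apply: (spanB (y:=y) (z:=z) (k:=k)); lia.
  split => //.
  + move=> k Hk.
    have [E|ky] := eqVneq (p k : nat) (p y); first by move/pinj: E => ->; lia.
    have [E|kz] := eqVneq (p k : nat) (p z); first by move/pinj: E => ->; lia.
    by case: (Hsp k Hk ky kz).
  + move=> k j Hk Ej.
    have -> : j = z by apply: pinj.
    have [E|ky] := eqVneq (p k : nat) (p y); first by move/pinj: E => ->; lia.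
    have [E|kz] := eqVneq (p k : nat) (p z); first by move/pinj: E => ->; lia.
    by case: (Hsp k Hk ky kz); lia.
Qed.
End B.
End Comb.


Section Cons.
Variables (n : nat) (p : 'S_n) (m : 'I_n) (c0 : nat).
Hypothesis Hinc : forall i j : 'I_n, i < j -> j <= m -> p i < p j.
Hypothesis Hzz : forall x y z : 'I_n, m < x -> m < y -> x < z -> y < z -> p x < p z -> p z < p y -> False.
Hypothesis Hc0 : forall r : 'I_n, r = m.+1 :> nat -> c0 = p r.

Lemma pinj' (i j : 'I_n) : p i = p j :> nat -> i = j.
Proof. by move/val_inj/perm_inj. Qed.

Lemma b2L k : 0 < k -> k.-1 * k.+1 + k < k.+1 * k.+1.
Proof. by case: k => //= k _; nia. Qed.

Definition D v := \max_(j : 'I_n | (m < j) && (c0 <= p j <= v)) (j - m.+1).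
Definition D' v := \max_(j : 'I_n | (m < j) && (v <= p j < c0)) (j - m.+1).
Definition SS := n.+1 * n.+1.
Definition key v := if c0 <= v then SS + (D v * n.+1 + v) else SS - (D' v * n.+1 + (n - v)).
Definition dist (i : 'I_n) := if c0 <= p i then D (p i) * n.+1 + p i else D' (p i) * n.+1 + (n - p i).

Lemma D_le v : D v <= n.-1.
Proof. apply/bigmax_leqP => j _; have := ltn_ord j; lia. Qed.
Lemma D'_le v : D' v <= n.-1.
Proof. apply/bigmax_leqP => j _; have := ltn_ord j; lia. Qed.

Lemma D_mono v w : v <= w -> D v <= D w.
Proof.
move=> vw; apply/bigmax_leqP => j /andP [mj /andP [cj jv]].
by apply: leq_bigmax_cond; rewrite mj cj /=; lia.
Qed.
Lemma D'_anti v w : v <= w -> D' w <= D' v.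
Proof.
move=> vw; apply/bigmax_leqP => j /andP [mj /andP [cj jv]].
by apply: leq_bigmax_cond; rewrite mj jv /= andbT; lia.
Qed.

Lemma key_mono v w : v < w -> w < n -> key v < key w.
Proof.
move=> vw wn; rewrite /key.
have hDv := D_le v; have hDw := D_le w; have hD'v := D'_le v; have hD'w := D'_le w.
have m1 : D v * n.+1 <= D w * n.+1 by rewrite leq_mul2r D_mono ?orbT //; lia.
have m2 : D' w * n.+1 <= D' v * n.+1 by rewrite leq_mul2r D'_anti ?orbT //; lia.
have b1 : D' v * n.+1 <= n.-1 * n.+1 by rewrite leq_mul2r hD'v orbT.
have b2 : n.-1 * n.+1 + n < SS by apply: b2L; lia.
case: (leqP c0 v) => cv; case: (leqP c0 w) => cw; lia.
Qed.

Lemma key_bound v : v < n -> 0 < key v < 2 * SS.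
Proof.
move=> vn; rewrite /key.
have hDv := D_le v; have hD'v := D'_le v.
have b1 : D' v * n.+1 <= n.-1 * n.+1 by rewrite leq_mul2r hD'v orbT.
have b0 : D v * n.+1 <= n.-1 * n.+1 by rewrite leq_mul2r hDv orbT.
have b2 : n.-1 * n.+1 + n < SS by apply: b2L; lia.
case: (leqP c0 v) => cv; lia.
Qed.

Lemma dist_bound (i : 'I_n) : dist i < SS.
Proof.
have vn := ltn_ord (p i); rewrite /dist.
have hDv := D_le (p i); have hD'v := D'_le (p i).
have b1 : D' (p i) * n.+1 <= n.-1 * n.+1 by rewrite leq_mul2r hD'v orbT.
have b0 : D (p i) * n.+1 <= n.-1 * n.+1 by rewrite leq_mul2r hDv orbT.
have b2 : n.-1 * n.+1 + n < SS by apply: b2L; lia.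
case: (leqP c0 (p i)) => cv; lia.
Qed.

Lemma key_top (i : 'I_n) : c0 <= p i -> key (p i) = SS + dist i.
Proof. by rewrite /key /dist => ->. Qed.
Lemma key_bot (i : 'I_n) : p i < c0 -> key (p i) + dist i = SS.
Proof.
move=> h; have h' : (c0 <= p i) = false by rewrite leqNgt h.
have := dist_bound i; rewrite /key /dist h' /=; lia.
Qed.

Lemma Dtop (i : 'I_n) : m < i -> c0 <= p i -> D (p i) = i - m.+1.
Proof.
move=> mi ci.
have hr : m.+1 < n by have := ltn_ord i; lia.
have Er := @Hc0 (Ordinal hr) erefl.
apply/eqP; rewrite eqn_leq; apply/andP; split; last first.
  by apply: (@leq_bigmax_cond _ _ _ i); rewrite mi ci /=.
apply/bigmax_leqP => j /andP [mj /andP [cj ji]].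
case: (leqP j i) => ij; first lia.
exfalso; apply: (Hzz (x := Ordinal hr) (y := i) (z := j)) => //=; try lia.
- rewrite -Er ltn_neqAle cj andbT; apply/eqP => E.
  have : Ordinal hr = j by apply: pinj'; rewrite -Er E.
  by move/(congr1 val) => /=; lia.
- rewrite ltn_neqAle ji andbT; apply/eqP => /pinj' E; rewrite E in ij; lia.
Qed.

Lemma Dbot (i : 'I_n) : m < i -> p i < c0 -> D' (p i) = i - m.+1.
Proof.
move=> mi ci.
have hr : m.+1 < n by have := ltn_ord i; lia.
have Er := @Hc0 (Ordinal hr) erefl.
apply/eqP; rewrite eqn_leq; apply/andP; split; last first.
  by apply: (@leq_bigmax_cond _ _ _ i); rewrite mi ci leqnn.
apply/bigmax_leqP => j /andP [mj /andP [ij' jc]].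
case: (leqP j i) => ij; first lia.
have f1 : p i < p j.
  rewrite ltn_neqAle ij' andbT; apply/eqP => /pinj' E; rewrite E in ij; lia.
have f2 : p j < p (Ordinal hr) by rewrite -Er.
exfalso; apply: (Hzz (x := i) (y := Ordinal hr) (z := j)) => //=; lia.
Qed.

Lemma dist_mono (i j : 'I_n) : m < i -> i < j -> dist i < dist j.
Proof.
move=> mi ij.
have mj : m < j by lia.
have hi := ltn_ord (p i); have hj := ltn_ord (p j).
have E1 : exists r, dist i = (i - m.+1) * n.+1 + r /\ r <= n.
  rewrite /dist; case: (leqP c0 (p i)) => c.
    by exists (p i : nat); rewrite Dtop //; split => //; lia.
  by exists (n - p i); rewrite Dbot //; split => //; lia.
have E2 : exists r, dist j = (j - m.+1) * n.+1 + r /\ r <= n.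
  rewrite /dist; case: (leqP c0 (p j)) => c.
    by exists (p j : nat); rewrite Dtop //; split => //; lia.
  by exists (n - p j); rewrite Dbot //; split => //; lia.
case: E1 => r1 [-> h1]; case: E2 => r2 [-> h2].
have : (i - m.+1).+1 * n.+1 <= (j - m.+1) * n.+1 by rewrite leq_mul2r; apply/orP; right; lia.
rewrite mulSn; lia.
Qed.
End Cons.

Import Order.TTheory GRing.Theory Num.Theory.

Section Geo.
Variable R : realType.
Local Open Scope ring_scope.

Lemma fig_cases (x y : R) : in_figure x y ->
  (0 <= x /\ x <= 2 /\ y = x) \/ (2 <= x /\ x <= 3 /\ y = 3 - x) \/ (2 <= x /\ x <= 3 /\ y = x - 1).
Proof.
by case=> [[/andP[? ?] ?]|[[/andP[? ?] ?]|[/andP[? ?] ?]]]; [left|right;left|right;right].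
Qed.

Definition col3 (x y : R) := 2 <= x /\ x <= 3 /\ (y = 3 - x \/ y = x - 1).

Lemma L1 (a b c d : R) : in_figure a b -> in_figure c d -> a < c -> d < b -> col3 c d.
Proof.
move=> /fig_cases H1 /fig_cases H2 ac db; rewrite /col3.
case: H1 => [[?[??]]|[[?[??]]|[?[??]]]]; case: H2 => [[?[??]]|[[?[??]]|[?[??]]]];
  try (exfalso; lra); (split; [lra|split; [lra|first [left; lra | right; lra]]]).
Qed.

Lemma L2 (a b c d : R) : col3 a b -> in_figure c d -> a < c -> col3 c d.
Proof.
move=> [? [? _]] /fig_cases H2 ac; rewrite /col3.
case: H2 => [[?[??]]|[[?[??]]|[?[??]]]]; try (exfalso; lra); (split; [lra|split; [lra|first [left; lra | right; lra]]]).
Qed.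

Lemma L3 (a b c d e f : R) : col3 a b -> col3 c d -> col3 e f -> a < c -> c < e ->
  ~ (d < f < b) /\ ~ (b < f < d).
Proof.
move=> [?[? H1]] [?[? H2]] [?[? H3]] ac ce.
split=> /andP [h1 h2]; case: H1 => ?; case: H2 => ?; case: H3 => ?; lra.
Qed.
Variables (n : nat) (p : 'S_n).

Lemma geom_avoid : in_geom R p -> avoids p [:: 4; 3; 1; 2]%N /\ avoids p [:: 3; 1; 4; 2]%N.
Proof.
move=> [x [y [Hx [Hy Hf]]]].
have K (s : seq nat) (f : 'I_(size s) -> 'I_n) (a b : 'I_(size s)) :
  (forall a b : 'I_(size s), (p (f a) < p (f b))%N = (nth 0%N s a < nth 0%N s b)%N) ->
  (nth 0%N s a < nth 0%N s b)%N -> y (f a) < y (f b).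
  by move=> Hv Hab; apply: Hy; rewrite Hv.
have X (s : seq nat) (f : 'I_(size s) -> 'I_n) (a b : 'I_(size s)) :
  (forall a b : 'I_(size s), (a < b)%N -> (f a < f b)%N) -> (a < b)%N -> x (f a) < x (f b).
  by move=> Hm Hab; apply: Hx; apply: Hm.
pose o0 := (@Ordinal 4 0 isT); pose o1 := (@Ordinal 4 1 isT).
pose o2 := (@Ordinal 4 2 isT); pose o3 := (@Ordinal 4 3 isT).
split=> -[f [Hm Hv]].
- have c1 := L1 (Hf (f o0)) (Hf (f o1)) (X _ f o0 o1 Hm isT) (K _ f o1 o0 Hv isT).
  have c2 := L1 (Hf (f o0)) (Hf (f o2)) (X _ f o0 o2 Hm isT) (K _ f o2 o0 Hv isT).
  have c3 := L1 (Hf (f o0)) (Hf (f o3)) (X _ f o0 o3 Hm isT) (K _ f o3 o0 Hv isT).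
  have [H _] := L3 c1 c2 c3 (X _ f o1 o2 Hm isT) (X _ f o2 o3 Hm isT).
  by apply: H; rewrite (K _ f o2 o3 Hv isT) (K _ f o3 o1 Hv isT).
- have c1 := L1 (Hf (f o0)) (Hf (f o1)) (X _ f o0 o1 Hm isT) (K _ f o1 o0 Hv isT).
  have c3 := L1 (Hf (f o0)) (Hf (f o3)) (X _ f o0 o3 Hm isT) (K _ f o3 o0 Hv isT).
  have c2 := L2 c1 (Hf (f o2)) (X _ f o1 o2 Hm isT).
  have [_ H] := L3 c1 c2 c3 (X _ f o1 o2 Hm isT) (X _ f o2 o3 Hm isT).
  by apply: H; rewrite (K _ f o1 o3 Hv isT) (K _ f o3 o2 Hv isT).
Qed.
End Geo.

Import Order.TTheory GRing.Theory Num.Theory.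

Section ConsR.
Variable R : realType.
Variables (n : nat) (p : 'S_n) (m : 'I_n) (c0 : nat).
Hypothesis Hinc : forall i j : 'I_n, (i < j)%N -> (j <= m)%N -> (p i < p j)%N.
Hypothesis Hzz : forall x y z : 'I_n, (m < x)%N -> (m < y)%N -> (x < z)%N -> (y < z)%N ->
   (p x < p z)%N -> (p z < p y)%N -> False.
Hypothesis Hc0 : forall r : 'I_n, r = m.+1 :> nat -> c0 = p r.
Local Open Scope ring_scope.

Let s : R := (SS n)%:R.
Lemma s_gt0 : 0 < s. Proof. by rewrite /s ltr0n /SS muln_gt0. Qed.

Lemma divlt (a b : nat) : (a < b)%N -> a%:R / s < b%:R / s.
Proof. by move=> h; rewrite ltr_pM2r ?invr_gt0 ?s_gt0 // ltr_nat. Qed.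
Lemma divle (a b : nat) : (a <= b)%N -> a%:R / s <= b%:R / s.
Proof. by move=> h; rewrite ler_pM2r ?invr_gt0 ?s_gt0 // ler_nat. Qed.
Lemma div_ge0 (a : nat) : 0 <= a%:R / s.
Proof. by rewrite divr_ge0 // ltW // s_gt0. Qed.
Lemma div_lt2 (a : nat) : (a < 2 * SS n)%N -> a%:R / s < 2.
Proof.
move=> h; rewrite ltr_pdivrMr ?s_gt0 //.
have : (a%:R : R) < (2 * SS n)%:R by rewrite ltr_nat.
by rewrite natrM /s.
Qed.
Lemma div_le1 (a : nat) : (a <= SS n)%N -> a%:R / s <= 1.
Proof.
move=> h; rewrite ler_pdivrMr ?s_gt0 // mul1r /s ler_nat //.
Qed.
Lemma div_self : s / s = 1.
Proof. by rewrite divff // gt_eqF // s_gt0. Qed.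

Definition yy (i : 'I_n) : R := (key p m c0 (p i))%:R / s.
Definition xx (i : 'I_n) : R := if (i <= m)%N then yy i else 2 + (dist p m c0 i)%:R / s.

Lemma construct : in_geom R p.
Proof.
exists xx, yy; split; [|split].
- move=> i j ij; rewrite /xx.
  case: (leqP j m) => jm.
    have im : (i <= m)%N by lia.
    rewrite im /yy; apply: divlt. exact: (key_mono p m c0 (Hinc ij jm) (ltn_ord (p j))).
  case: (leqP i m) => im.
    have h1 : yy i < 2.
      by apply: div_lt2; have := key_bound p m c0 (ltn_ord (p i)); lia.
    have h2 := div_ge0 (dist p m c0 j).
    lra.
  have := divlt (dist_mono Hzz Hc0 im ij); lra.
- move=> i j h; apply: divlt; exact: (key_mono p m c0 h (ltn_ord (p j))).
- move=> i; rewrite /in_figure /xx /yy.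
  have hk := key_bound p m c0 (ltn_ord (p i)).
  case: (leqP i m) => im.
    left; split => //; apply/andP; split; [exact: div_ge0| apply/ltW/div_lt2; lia].
  have hd := dist_bound p m c0 i; have h0 := div_ge0 (dist p m c0 i).
  have h1 : (dist p m c0 i)%:R / s <= 1 by apply: div_le1; lia.
  case: (leqP c0 (p i)) => ci.
    right; right; split; first by apply/andP; split; lra.
    rewrite key_top // natrD mulrDl div_self; lra.
  right; left; split; first by apply/andP; split; lra.
  have E := key_bot m ci.
  have E' : (key p m c0 (p i))%:R = s - (dist p m c0 i)%:R :> R.
    by rewrite /s -E natrD; lra.
  rewrite E' mulrBl div_self; lra.
Qed.
End ConsR.

Theorem proposition4p1 (R : realType) (n : nat) (p : 'S_n) :
  (simple_perm p /\ avoids p [:: 4; 3; 1; 2]%N /\ avoids p [:: 3; 1; 4; 2]%N)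
  <-> (simple_perm p /\ in_geom R p).
Proof.
split.
- move=> [Hs [H4312 H3142]]; split => //.
  case: n p Hs H4312 H3142 => [|n'] p Hs H4312 H3142.
    by exists (fun _ => 0%R), (fun _ => 0%R); split; [|split]; case.
  pose m := (p^-1 ord_max)%g.
  have Hm : p m = n'.+1.-1 :> nat by rewrite /m permKV.
  pose c0 := oapp (fun r : 'I_n'.+1 => nat_of_ord (p r)) 0%N (insub m.+1).
  apply: (@construct R _ p m c0).
  + move=> i j ij jm.
    case: (ltngtP j m) jm => // [jm|jE] _; first exact: (claimA Hm H3142 Hs ij jm).
    have E : j = m by apply: ord_inj.
    rewrite E Hm; apply: (ltN Hm); rewrite -E; apply/eqP => E'; rewrite E' in ij; lia.
  + move=> x y z mx my xz yz h1 h2.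
    have hr : (m.+1 < n'.+1)%N by have := ltn_ord z; lia.
    exact: (claimB Hm H3142 H4312 Hs (r0 := Ordinal hr) erefl mx my xz yz h1 h2).
  + move=> r Er; rewrite /c0; case: insubP => [r' _ Er'|] /=.
      by have -> : r' = r by apply: ord_inj; rewrite Er' Er.
    by rewrite -Er ltn_ord.
- move=> [Hs Hg]; have [h1 h2] := geom_avoid Hg; by split.
Qed.
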